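(* Let $p \geq 2$ be a real number (the computational budget). Let $c_{a,1}>0$ and $c_{c,1}>0$ be constants, let $r_{a,1}:(0,\infty)\to(0,\infty)$ be a positive, decreasing, at least twice continuously differentiable function, and let $r_{c,1}:(0,\infty)\to(0,\infty)$ be a positive, increasing, at least twice continuously differentiable function. Define $$u_1:[1,p-1]\to(0,\infty),\qquad u_1(n_1)=\frac{1}{p-n_1}\Big(c_{a,1}\,r_{a,1}(n_1)+c_{c,1}\,r_{c,1}(n_1)\Big).$$ Assume that $$c_{a,1}\,r_{a,1}''(n_1)+c_{c,1}\,r_{c,1}''(n_1)>0 \quad\text{for all } n_1\in[1,p-1].$$ Then $u_1$ has a unique global minimum $n_1^*\in[1,p-1]$.
   Context: The functions $r_{a,1}$ and $r_{c,1}$ model, respectively, an accuracy rate and an evaluation-cost rate of a low-fidelity model trained with $n_1$ high-fidelity samples: for a high-fidelity model output with Pearson correlation $\rho_1(n_1)$ to the low-fidelity output and low-fidelity evaluation cost $w_1(n_1)$ (high-fidelity cost normalized to $1$), one has $1-\rho_1^2(n_1)\le c_{a,1}r_{a,1}(n_1)$ and $w_1(n_1)\le c_{c,1}r_{c,1}(n_1)$. These bounds are not needed for the statement, which concerns only $u_1$. *)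

(* Defs.v *)
From Stdlib Require Import Reals.
From Coquelicot Require Import Coquelicot.
Open Scope R_scope.

Definition C2_pos (f : R -> R) : Prop :=
  forall x, 0 < x ->
    ex_derive f x /\ ex_derive (Derive f) x /\
    continuous (Derive f) x /\ continuous (Derive (Derive f)) x.

(* The objective u_1 (only meaningful on [1, p-1]). *)
Definition u1 (p ca cc : R) (ra rc : R -> R) (n : R) : R :=
  / (p - n) * (ca * ra n + cc * rc n).

(* Main.v *)
Require Import Defs.
From Stdlib Require Import Reals.
From Coquelicot Require Import Coquelicot.
From Stdlib Require Import Lra.
Open Scope R_scope.

Theorem proposition1 (p ca cc : R) (ra rc : R -> R)
  (hp : 2 <= p) (hca : 0 < ca) (hcc : 0 < cc)
  (ra_pos : forall x, 0 < x -> 0 < ra x)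
  (ra_dec : forall x y, 0 < x -> x <= y -> ra y <= ra x)
  (ra_C2 : C2_pos ra)
  (rc_pos : forall x, 0 < x -> 0 < rc x)
  (rc_inc : forall x y, 0 < x -> x <= y -> rc x <= rc y)
  (rc_C2 : C2_pos rc)
  (hconv : forall n, 1 <= n <= p - 1 ->
     0 < ca * Derive (Derive ra) n + cc * Derive (Derive rc) n) :
  exists nstar, (1 <= nstar <= p - 1) /\
    (forall n, 1 <= n <= p - 1 -> u1 p ca cc ra rc nstar <= u1 p ca cc ra rc n) /\
    (forall m, 1 <= m <= p - 1 ->
       (forall n, 1 <= n <= p - 1 -> u1 p ca cc ra rc m <= u1 p ca cc ra rc n) ->
       m = nstar).
Proof.
  set (f := fun x => ca * ra x + cc * rc x).
  set (g := fun x => ca * Derive ra x + cc * Derive rc x).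
  set (g2 := fun x => ca * Derive (Derive ra) x + cc * Derive (Derive rc) x).
  set (N := fun x => g x * (p - x) + f x).
  set (h := u1 p ca cc ra rc).
  assert (Hf : forall x, 0 < x -> is_derive f x (g x)).
  { intros x hx. destruct (ra_C2 x hx) as [d1 _]. destruct (rc_C2 x hx) as [d2 _].
    unfold f, g. auto_derive. repeat split; auto. rewrite !Rmult_1_l; reflexivity. }
  assert (Hg : forall x, 0 < x -> is_derive g x (g2 x)).
  { intros x hx. destruct (ra_C2 x hx) as [_ [d1 _]]. destruct (rc_C2 x hx) as [_ [d2 _]].
    unfold g, g2. auto_derive; [repeat split; auto | rewrite !Rmult_1_l; reflexivity]. }
  assert (HN : forall x, 0 < x -> derivable_pt_lim N x (g2 x * (p - x))).
  { intros x hx. apply is_derive_Reals. unfold N.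
    replace (g2 x * (p - x)) with (g2 x * (p - x) + g x * (0 - 1) + g x) by ring.
    apply (is_derive_plus (fun y => g y * (p - y)) f); [|apply Hf; lra].
    apply (is_derive_mult g (fun y => p - y)); [apply Hg; lra| |].
    - auto_derive; [exact I | ring].
    - intros; apply Rmult_comm. }
  assert (Hh : forall x, 0 < x < p -> derivable_pt_lim h x (N x / (p - x) ^ 2)).
  { intros x hx. apply is_derive_Reals. unfold h, u1.
    assert (H1 : is_derive (fun y => p - y) x (0 - 1)).
    { auto_derive; [exact I | ring]. }
    assert (H2 : is_derive (fun y => / (p - y)) x (- (0 - 1) / (p - x) ^ 2)).
    { eapply (is_derive_inv (fun y => p - y)); auto. simpl; lra. }
    replace (N x / (p - x) ^ 2) with
      ((- (0 - 1) / (p - x) ^ 2) * f x + / (p - x) * g x).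
    2:{ unfold N. field. lra. }
    apply (is_derive_mult (fun y => / (p - y)) f); [exact H2 | apply Hf; lra |].
    intros; apply Rmult_comm. }
  assert (HNinc : forall x y, 1 <= x -> x < y -> y <= p - 1 -> N x < N y).
  { intros x y hx hxy hy.
    destruct (MVT_cor2 N (fun z => g2 z * (p - z)) x y hxy) as [c [Hc Hc2]].
    { intros c hc. apply HN. lra. }
    assert (0 < g2 c) by (apply hconv; lra).
    assert (0 < g2 c * (p - c)) by (apply Rmult_lt_0_compat; lra).
    assert (0 < g2 c * (p - c) * (y - x)) by (apply Rmult_lt_0_compat; lra).
    lra. }
  destruct (continuity_ab_min h 1 (p - 1)) as [m [Hm Hmi]].
  { lra. }
  { intros c hc. apply derivable_continuous_pt. exists (N c / (p - c) ^ 2). apply Hh. lra. }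
  exists m. split; [exact Hmi|]. split; [exact Hm|].
  assert (key : forall a b, 1 <= a -> a < b -> b <= p - 1 ->
            (forall n, 1 <= n <= p - 1 -> h a <= h n) -> h a = h b -> False).
  { intros a b ha hab hb Ha Hab.
    destruct (MVT_cor2 h (fun z => N z / (p - z) ^ 2) a b hab) as [c [Hc Hc2]].
    { intros c hc. apply Hh. lra. }
    assert (Hpc : 0 < (p - c) ^ 2) by (apply pow_lt; lra).
    assert (HNc : N c = 0).
    { assert (N c / (p - c) ^ 2 = 0).
      { apply (Rmult_eq_reg_r (b - a)); [|lra]. lra. }
      unfold Rdiv in H. apply Rmult_integral in H. destruct H as [H|H]; auto.
      exfalso. apply (Rinv_neq_0_compat ((p-c)^2)); lra. }
    destruct (MVT_cor2 h (fun z => N z / (p - z) ^ 2) a c (proj1 Hc2)) as [d [Hd Hd2]].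
    { intros e he. apply Hh. lra. }
    assert (Hpd : 0 < (p - d) ^ 2) by (apply pow_lt; lra).
    assert (HNd : N d < 0) by (rewrite <- HNc; apply HNinc; lra).
    assert (N d / (p - d) ^ 2 < 0).
    { unfold Rdiv. apply Rmult_neg_pos; [lra| apply Rinv_0_lt_compat; lra]. }
    assert (N d / (p - d) ^ 2 * (c - a) < 0) by (apply Rmult_neg_pos; lra).
    assert (h a <= h c) by (apply Ha; lra). lra. }
  intros m' Hm'i Hm'.
  assert (E : h m = h m') by (apply Rle_antisym; [apply Hm; lra | apply Hm'; lra]).
  destruct (Rtotal_order m m') as [Hlt|[Heq|Hgt]]; auto; exfalso.
  - apply (key m m'); try lra; auto.
  - apply (key m' m); try lra; auto.
Qed.
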